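(* Let $V$ be a Seifert matrix and let $\omega,\omega'$ be unit complex numbers that are roots of the same irreducible polynomial over $\mathbb{Q}$. Then $\sigma_\omega(V)\equiv\sigma_{\omega'}(V)\pmod 2$. In particular, if $\omega_p\in S$ is a root of an irreducible rational polynomial having another root $\omega\in S$, no Seifert matrix $V$ (metabolic or not) can have $\sigma_{\omega_p}(V)$ odd while $\sigma_{\omega}(V)=0$.
   Context: A Seifert matrix is a square integral matrix $V$ with $\det(V-V^T)=\pm1$; for a unit complex number $\omega$, $\sigma_\omega(V)$ is the signature of the Hermitian matrix $(1-\omega)V+(1-\bar\omega)V^T$. $S$ is the set of unit complex numbers with positive imaginary part. *)

(* Defs.v *)
From HB Require Import structures.
From mathcomp Require Import all_boot all_order all_algebra all_field.
Set Implicit Arguments. Unset Strict Implicit. Unset Printing Implicit Defensive.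
Import Order.TTheory GRing.Theory Num.Theory.
Local Open Scope ring_scope.

(* Complex numbers are modelled by algC (algebraic complex numbers); every
   number considered in the theorem is a root of a nonzero rational
   polynomial, hence algebraic. *)

Definition eigenvalues (C : closedFieldType) (n : nat) (A : 'M[C]_n) : seq C :=
  sval (closed_field_poly_normal (char_poly A)).

Definition signature (n : nat) (A : 'M[algC]_n) : int :=
  (count (fun x : algC => 0 < x) (eigenvalues A))%:Z
  - (count (fun x : algC => x < 0) (eigenvalues A))%:Z.

Definition seifert_matrix (n : nat) (V : 'M[int]_n) : Prop :=
  \det (V - V^T) = 1 \/ \det (V - V^T) = -1.

Definition sigma_omega (n : nat) (w : algC) (V : 'M[int]_n) : int :=
  let VC := map_mx (fun z : int => z%:~R : algC) V in
  signature ((1 - w) *: VC + (1 - w^*) *: VC^T).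

Definition in_S (w : algC) : Prop := `|w| = 1 /\ 0 < 'Im w.

(* Main.v *)
Require Import Defs.
From HB Require Import structures.
From mathcomp Require Import all_boot all_order all_algebra all_field.
From mathcomp Require Import zify ring.
Import Order.TTheory GRing.Theory Num.Theory.
Local Open Scope ring_scope.
Set Implicit Arguments.

Lemma rank_diag (F : fieldType) n (d : 'rV[F]_n) :
  \rank (diag_mx d) = (\sum_(i < n) (d ord0 i != 0%R))%N.
Proof.
elim: n d => [|n IH] d; first by rewrite big_ord0 flatmx0 mxrank0.
have := diag_mx_row (lsubmx (d : 'rV_(1 + n))) (rsubmx (d : 'rV_(1 + n))).
rewrite hsubmxK => E.
have := rank_diag_block_mx (diag_mx (lsubmx (d : 'rV_(1 + n)))) (diag_mx (rsubmx (d : 'rV_(1 + n)))).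
rewrite -E !IH => H; rewrite [LHS]H.
rewrite big_ord_recl; congr (_ + _)%N; last first.
  by apply: eq_bigr => i _; rewrite mxE; congr (d _ _ != _); apply: val_inj.
have -> : diag_mx (lsubmx (d : 'rV_(1 + n))) = (d ord0 ord0)%:M.
  apply/matrixP => i j; rewrite !ord1 !mxE /=.
  by congr (d _ _ *+ _); apply: val_inj.
case: eqP => [->|/eqP nz]; first by rewrite raddf0 mxrank0.
by rewrite -scalemx1 (eqmx_scale _ nz) mxrank1.
Qed.

Lemma char_poly_conj (F : fieldType) n (P D : 'M[F]_n) : P \in unitmx ->
  char_poly (invmx P *m D *m P) = char_poly D.
Proof.
move=> Pu; rewrite /char_poly /char_poly_mx.
have e : 'X%:M - map_mx polyC (invmx P *m D *m P) =
   map_mx polyC (invmx P) *m ('X%:M - map_mx polyC D) *m map_mx polyC P.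
  rewrite !map_mxM mulmxBr mulmxBl mul_mx_scalar; congr (_ - _).
  by rewrite -scalemxAl -map_mxM mulVmx // map_mx1 scalemx1.
rewrite e !det_mulmx mulrAC !det_map_mx -rmorphM -det_mulmx mulVmx //.
by rewrite det1 mul1r.
Qed.

Lemma sum_count (T : Type) (s : seq T) (b : pred T) :
  (\sum_(i <- s) (b i : nat))%N = count b s.
Proof. by elim: s => [|x s IH]; rewrite ?big_nil ?big_cons ?IH. Qed.

Lemma count_real (s : seq algC) : all (fun x => x \is Num.real) s ->
  count (fun x : algC => x != 0) s = (count (fun x : algC => (0 < x)%R) s + count (fun x : algC => (x < 0)%R) s)%N.
Proof.
elim: s => [|x s IH] //= /andP[xr /IH ->].
by case: (real_ltgtP xr (real0 algC)); rewrite /= ?add0n ?add1n ?addnS ?addSn.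
Qed.

Lemma rank_unit_l (F : fieldType) n (A B : 'M[F]_n) : A \in unitmx ->
  \rank (A *m B) = \rank B.
Proof.
move=> Au; apply/eqP; rewrite eqn_leq mxrankM_maxr /=.
have {1}-> : B = invmx A *m (A *m B) by rewrite mulmxA mulVmx // mul1mx.
exact: mxrankM_maxr.
Qed.

Lemma sig_rank n (H : 'M[algC]_n) : H \is hermsymmx ->
  (signature H = (\rank H)%:Z %[mod 2])%Z.
Proof.
move=> hH; have /orthomx_spectralP EH := hermitian_normalmx hH.
move: EH; set P := spectralmx H; set d := spectral_diag H => EH.
have Pu : P \in unitmx := spectral_unit H.
have /mxOverP dr := hermitian_spectral_diag_real hH.
have cp : char_poly H = \prod_(i < n) ('X - (d ord0 i)%:P).
  rewrite {1}EH char_poly_conj // char_poly_trig ?diag_mx_is_trig //.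
  by apply: eq_bigr => i _; rewrite mxE eqxx mulr1n.
have pe : perm_eq (eigenvalues H) [seq d ord0 i | i <- enum 'I_n].
  apply: prod_XsubC_eq; rewrite big_map big_enum /= -cp.
  rewrite /eigenvalues; case: closed_field_poly_normal => r /= Er.
  by rewrite [RHS]Er (monicP (char_poly_monic H)) scale1r.
have rk : \rank H = \rank (diag_mx d).
  by rewrite {1}EH mxrankMfree ?row_free_unit // rank_unit_l ?unitmx_inv.
rewrite /signature rk rank_diag sum_count !(permP pe).
have -> : count (fun i => d ord0 i != 0) (index_enum 'I_n) =
   count (fun x : algC => x != 0) [seq d ord0 i | i <- enum 'I_n] by rewrite count_map enumT.
rewrite count_real; last by apply/allP => x /mapP [i _ ->]; apply: dr.
rewrite PoszD.
set a := count _ _; set b := count _ _.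
have -> : (a%:Z + b%:Z = b%:Z * 2 + (a%:Z - b%:Z))%R.
  by lia.
by rewrite modzMDl.
Qed.

Lemma minor_exists (F : fieldType) m n (A : 'M[F]_(m,n)) :
  exists (f : 'I_(\rank A) -> 'I_m) (g : 'I_(\rank A) -> 'I_n),
    \det (mxsub f g A) != 0.
Proof.
pose f := maxrankfun A.
have Bf : row_free (rowsub f A) := maxrowsub_free A.
have BTf : row_full (rowsub f A)^T by rewrite /row_full mxrank_tr.
pose g := fullrankfun BTf.
exists f, g.
have := fullrowsub_unit BTf; rewrite unitmxE unitfE.
have -> : rowsub (fullrankfun BTf) (rowsub f A)^T = (mxsub f g A)^T.
  by apply/matrixP => i j; rewrite !mxE.
by rewrite det_tr.
Qed.

Lemma rank_mxsub (F : fieldType) m n m' n' (f : 'I_m' -> 'I_m) (g : 'I_n' -> 'I_n)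
  (A : 'M[F]_(m,n)) : (\rank (mxsub f g A) <= \rank A)%N.
Proof.
rewrite mxsubrc rowsubE.
have -> : colsub g A = A *m colsub g 1%:M by rewrite mulmx_colsub mulmx1.
apply: leq_trans (mxrankM_maxr _ _) _; exact: mxrankM_maxl.
Qed.

Lemma rank_minors (F : fieldType) m n (A B : 'M[F]_(m,n)) :
  (forall k (f : 'I_k -> 'I_m) (g : 'I_k -> 'I_n),
      (\det (mxsub f g A) != 0) = (\det (mxsub f g B) != 0)) ->
  \rank A = \rank B.
Proof.
have key : forall A B : 'M[F]_(m,n), (forall k (f : 'I_k -> 'I_m) (g : 'I_k -> 'I_n),
      (\det (mxsub f g A) != 0) = (\det (mxsub f g B) != 0)) ->
  (\rank A <= \rank B)%N.
  move=> A0 B0 h; have [f [g]] := @minor_exists F m n A0; rewrite h => nz.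
  have : mxsub f g B0 \in unitmx by rewrite unitmxE unitfE.
  move/mxrank_unit => <-; exact: rank_mxsub.
move=> h; apply/eqP; rewrite eqn_leq !key // => k f g; rewrite h.
Qed.
Lemma root_irr (p : {poly rat}) (x : algC) :
  irreducible_poly p -> root (map_poly ratr p) x ->
  forall q : {poly rat}, root (map_poly ratr q) x = (p %| q).
Proof.
move=> [_ irr] rx q.
have [px _ dvx] := minCpolyP x.
have s1 : size px != 1.
  have := dvx 1; rewrite rmorph1 dvdp1 => <-; exact: root1.
have e : px %= p by apply: irr => //; rewrite -dvx.
by rewrite dvx (eqp_dvdl _ e).
Qed.

Lemma root_same (p : {poly rat}) (x y : algC) :
  irreducible_poly p -> root (map_poly ratr p) x -> root (map_poly ratr p) y ->
  forall q : {poly rat}, root (map_poly ratr q) x = root (map_poly ratr q) y.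
Proof. by move=> ip rx ry q; rewrite (@root_irr p x ip rx) (@root_irr p y ip ry). Qed.

Definition cfu (x : algC) : commr_rmorph (ratr : {rmorphism rat -> algC}) x :=
  fun a => mulrC _ _.

Definition ev (x : algC) : {poly rat} -> algC := horner_morph (cfu x).

Lemma evE x q : ev x q = (map_poly ratr q).[x].
Proof. by []. Qed.

Definition Dm n (V : 'M[int]_n) (x : algC) : 'M[algC]_n :=
  let VC := map_mx (fun z : int => z%:~R : algC) V in x *: VC - VC^T.

Definition Dpoly n (V : 'M[int]_n) : 'M[{poly rat}]_n :=
  \matrix_(i, j) ('X * ((V i j)%:~R)%:P - ((V j i)%:~R)%:P).

Lemma Dm_map n (V : 'M[int]_n) x : map_mx (ev x) (Dpoly V) = Dm V x.
Proof.
apply/matrixP => i j; rewrite /Dm !mxE /ev.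
by rewrite rmorphB rmorphM /= horner_morphX !horner_morphC !rmorph_int.
Qed.

Lemma rank_Dm n (V : 'M[int]_n) (p : {poly rat}) (x y : algC) :
  irreducible_poly p -> root (map_poly ratr p) x -> root (map_poly ratr p) y ->
  \rank (Dm V x) = \rank (Dm V y).
Proof.
move=> ip rx ry; apply: rank_minors => k f g.
rewrite -!Dm_map -!map_mxsub !det_map_mx.
apply: (congr1 negb); exact: (@root_same p x y ip rx ry).
Qed.

Definition Hm n (V : 'M[int]_n) (w : algC) : 'M[algC]_n :=
  let VC := map_mx (fun z : int => z%:~R : algC) V in
  (1 - w) *: VC + (1 - w^*) *: VC^T.

Lemma Hm_herm n (V : 'M[int]_n) w : Hm V w \is hermsymmx.
Proof.
apply/is_hermitianmxP; rewrite expr0 scale1r.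
apply/matrixP => i j; rewrite /Hm !mxE.
by rewrite rmorphD !rmorphM /= !rmorphB /= rmorph1 conjCK !rmorph_int addrC.
Qed.

Lemma Hm_Dm n (V : 'M[int]_n) w : `|w| = 1 -> w != 0 ->
  Hm V w = ((1 - w) / w) *: Dm V w.
Proof.
move=> nw wn.
have wc : w^* = w^-1.
  have e : w * w^* = 1 by rewrite -normCK nw expr1n.
  by rewrite -[w^*](mulKf wn) e mulr1.
apply/matrixP => i j; rewrite /Hm /Dm !mxE wc.
field; exact: wn.
Qed.

Lemma part1 (n : nat) (V : 'M[int]_n) (w w' : algC) (p : {poly rat}) :
  `|w| = 1 -> `|w'| = 1 ->
  irreducible_poly p ->
  root (map_poly ratr p) w -> root (map_poly ratr p) w' ->
  (sigma_omega w V = sigma_omega w' V %[mod 2])%Z.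
Proof.
move=> nw nw' ip rw rw'.
have h1 := @sig_rank n _ (Hm_herm V w); have h2 := @sig_rank n _ (Hm_herm V w').
rewrite /sigma_omega /=; rewrite /Hm /= in h1 h2; rewrite h1 h2.
have nz : forall x : algC, `|x| = 1 -> x != 0.
  move=> x nx; apply/eqP => x0; move: nx; rewrite x0 normr0 => /eqP.
  by rewrite eq_sym oner_eq0.
have r1 : forall x : algC, root (map_poly ratr ('X - 1)) x = (x == 1).
  by move=> x; rewrite rmorphB /= map_polyX rmorph1 root_XsubC.
have same := @root_same p w w' ip rw rw' ('X - 1); rewrite !r1 in same.
have [w1|wn1] := eqVneq w 1.
  by move: same; rewrite w1 eqxx => /esym/eqP ->.
have w'n1 : w' != 1 by rewrite -same.
congr (_ %% _)%Z; congr Posz.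
rewrite -/(Hm V w) -/(Hm V w') (@Hm_Dm n V w nw (nz _ nw)) (@Hm_Dm n V w' nw' (nz _ nw')).
have c1 : (1 - w) / w != 0 by rewrite mulf_neq0 ?invr_eq0 ?(nz _ nw) // subr_eq0 eq_sym.
have c2 : (1 - w') / w' != 0 by rewrite mulf_neq0 ?invr_eq0 ?(nz _ nw') // subr_eq0 eq_sym.
rewrite !mxrank_scale_nz //.
exact: (@rank_Dm n V p w w' ip rw rw').
Qed.

Theorem mainTheorem8 :
  (forall (n : nat) (V : 'M[int]_n) (w w' : algC) (p : {poly rat}),
      seifert_matrix V ->
      `|w| = 1 -> `|w'| = 1 ->
      irreducible_poly p ->
      root (map_poly ratr p) w -> root (map_poly ratr p) w' ->
      (sigma_omega w V = sigma_omega w' V %[mod 2])%Z)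
  /\
  (forall (wp w : algC) (p : {poly rat}),
      in_S wp -> in_S w -> w != wp ->
      irreducible_poly p ->
      root (map_poly ratr p) wp -> root (map_poly ratr p) w ->
      forall (n : nat) (V : 'M[int]_n),
        seifert_matrix V ->
        ~ (~~ (2 %| sigma_omega wp V)%Z /\ sigma_omega w V = 0)).
Proof.
split.
  by move=> n V w w' p _ nw nw' ip rw rw'; exact: (@part1 n V w w' p nw nw' ip rw rw').
move=> wp w p [nwp _] [nw _] _ ip rwp rw n V _ [odd z].
have := @part1 n V wp w p nwp nw ip rwp rw; rewrite z mod0z => e.
by move/negP: odd; apply; apply/dvdz_mod0P.
Qed.
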